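(* Let $b\mid M$ with $b<M$, and let $C$ be the array code over $\mathbb{F}_q$ whose columns are associated with the elements of a $b$-spread of $\mathbb{F}_q^M$, each exactly once. Then $C$ has symbol locality $r_{\mathrm s}=2$ and node locality satisfying $2\le r_{\mathrm n}\le b+1$. Moreover, there exists a $b$-spread of $\mathbb{F}_q^M$ for which the resulting code has $r_{\mathrm n}\le M/b$.
   Context: $q$ is a prime power. A $b$-spread of $\mathbb{F}_q^M$ is a set of $b$-dimensional subspaces of $\mathbb{F}_q^M$ that pairwise intersect only in $\{\overline{0}\}$ and whose union is $\mathbb{F}_q^M$. Given $b$-dimensional subspaces $V_1,\dots,V_n$ of $\mathbb{F}_q^M$, the array code whose columns are associated with them is obtained by placing a basis of $V_j$ as columns $(j-1)b+1,\dots,jb$ (the $j$th thick column) of an $M\times bn$ matrix $G$ and taking all $b\times n$ arrays whose column-by-column flattening lies in the row space of $G$. A set $S\subseteq[n]\setminus\{j\}$ is a recovery set for codeword column $j$ if each entry of column $j$ is a fixed $\mathbb{F}_q$-linear combination of the entries in columns indexed by $S$, valid for all codewords (equivalently $V_j\subseteq\sum_{k\in S}V_k$); it is a recovery set for symbol $(i,j)$ if $c_{i,j}$ alone is such a combination (equivalently the $i$th column of the $j$th thick column of $G$ lies in $\sum_{k\in S}V_k$). The node locality $r_{\mathrm n}$ (resp. symbol locality $r_{\mathrm s}$) is the smallest $r$ such that every codeword column (resp. symbol) has a recovery set of size at most $r$. *)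

(* Defs.v *)
From HB Require Import structures.
From mathcomp Require Import all_boot all_order all_algebra all_field.
Set Implicit Arguments. Unset Strict Implicit. Unset Printing Implicit Defensive.
Import GRing.Theory.
Local Open Scope ring_scope.

Section ArrayCodes.
Variables (F : finFieldType) (M b n : nat).

(* I.e. V enumerates a b-spread, each element exactly once. *)
Definition is_spread_family (V : 'I_n -> {vspace 'rV[F]_M}) : Prop :=
  [/\ forall j, \dim (V j) = b,
      forall i j, i != j -> (V i :&: V j = 0)%VS
    & forall v : 'rV[F]_M, exists j, v \in V j].

(* g j i = i-th column of the j-th thick column of the generator matrix G
   (i.e. i-th basis vector of V_j), written as a row vector of F^M. *)
Variable g : 'I_n -> 'I_b -> 'rV[F]_M.

(* The codeword (a b x n array) associated with message x : x *m G, reshaped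
   column by column. The code is the set of all such arrays. *)
Definition codeword (x : 'rV[F]_M) : 'M[F]_(b, n) :=
  \matrix_(i < b, k < n) (x *m (g k i)^T) 0 0.

Definition symbol_recovery_set (S : {set 'I_n}) (i : 'I_b) (j : 'I_n) : Prop :=
  j \notin S /\
  exists a : 'I_b -> 'I_n -> F, forall x : 'rV[F]_M,
    codeword x i j = \sum_(k in S) \sum_(i' < b) a i' k * codeword x i' k.

Definition node_recovery_set (S : {set 'I_n}) (j : 'I_n) : Prop :=
  j \notin S /\
  exists a : 'I_b -> 'I_b -> 'I_n -> F, forall x : 'rV[F]_M, forall i : 'I_b,
    codeword x i j = \sum_(k in S) \sum_(i' < b) a i i' k * codeword x i' k.

Definition symbol_local (r : nat) : Prop :=
  forall (i : 'I_b) (j : 'I_n), exists S : {set 'I_n}, (#|S| <= r)%N /\ symbol_recovery_set S i j.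

Definition node_local (r : nat) : Prop :=
  forall j : 'I_n, exists S : {set 'I_n}, (#|S| <= r)%N /\ node_recovery_set S j.

Definition symbol_locality (r : nat) : Prop :=
  symbol_local r /\ forall r', symbol_local r' -> (r <= r')%N.

Definition node_locality (r : nat) : Prop :=
  node_local r /\ forall r', node_local r' -> (r <= r')%N.

End ArrayCodes.

(* Main.v *)
Require Import Defs.
From HB Require Import structures.
From mathcomp Require Import all_boot all_order all_algebra all_field.
From Stdlib Require Import Classical_Prop.
Import GRing.Theory.
Local Open Scope ring_scope.

Section Rec.
Variables (F : finFieldType) (M b n : nat).
Variables (V : 'I_n -> {vspace 'rV[F]_M}) (B : 'I_n -> b.-tuple 'rV[F]_M).
Hypothesis HB : forall j, basis_of (V j) (B j).
Let g := fun j i => tnth (B j) i.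

Lemma rec_sum (S : {set 'I_n}) (v : 'rV[F]_M) :
  v \in (\sum_(k in S) V k)%VS ->
  exists a : 'I_b -> 'I_n -> F, forall x : 'rV[F]_M,
    (x *m v^T) 0 0 = \sum_(k in S) \sum_(i < b) a i k * codeword g x i k.
Proof.
move=> /memv_sumP[vs Hvs ->].
exists (fun i k => coord (B k) i (vs k)) => x.
rewrite linear_sum /= mulmx_sumr summxE; apply: eq_bigr => k kS.
have := Hvs k kS; rewrite -(span_basis (HB k)) => /coord_span {1}->.
rewrite linear_sum /= mulmx_sumr summxE; apply: eq_bigr => i _.
  by rewrite linearZ /= -scalemxAr [in LHS]mxE /codeword [in RHS]mxE /g (tnth_nth 0).
Qed.

Lemma dl_mul (l : 'I_M) (w : 'rV[F]_M) : (delta_mx (0 : 'I_1) l *m w^T) 0 0 = w 0 l.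
Proof. by rewrite -rowE !mxE. Qed.

Lemma rec_inv (S : {set 'I_n}) (v : 'rV[F]_M) (a : 'I_b -> 'I_n -> F) :
  (forall x : 'rV[F]_M,
    (x *m v^T) 0 0 = \sum_(k in S) \sum_(i < b) a i k * codeword g x i k) ->
  v \in (\sum_(k in S) V k)%VS.
Proof.
move=> H.
have -> : v = \sum_(k in S) \sum_(i < b) a i k *: g k i.
  apply/rowP => l; have := H (delta_mx 0 l); rewrite dl_mul => ->.
  rewrite summxE; apply: eq_bigr => k _; rewrite summxE; apply: eq_bigr => i _.
  by rewrite /codeword [X in _ * X = _]mxE dl_mul mxE.
apply: memv_sumr => k _; apply: rpred_sum => i _; apply: memvZ.
exact: (basis_mem (HB k)) (mem_tnth _ _).
Qed.
End Rec.

Section Part1.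
Variables (F : finFieldType) (M b n : nat).
Variables (V : 'I_n -> {vspace 'rV[F]_M}) (B : 'I_n -> b.-tuple 'rV[F]_M).
Hypothesis HB : forall j, basis_of (V j) (B j).
Hypothesis Hsp : is_spread_family b V.
Hypothesis bpos : (0 < b)%N.
Hypothesis bM : (b < M)%N.
Let g := fun j i => tnth (B j) i.

Lemma g_nz j i : g j i != 0.
Proof. exact: free_not0 (basis_free (HB j)) (mem_tnth i (B j)). Qed.

Lemma g_in j i : g j i \in V j.
Proof. exact: (basis_mem (HB j)) (mem_tnth i (B j)). Qed.

Lemma cap0 {j k v} : j != k -> v \in V j -> v \in V k -> v = 0.
Proof.
case: Hsp => _ Hc _ jk vj vk; apply/eqP; rewrite -memv0 -(Hc _ _ jk).
by rewrite memv_cap vj vk.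
Qed.

Lemma sym_rec {S i j} : symbol_recovery_set g S i j -> g j i \in (\sum_(k in S) V k)%VS.
Proof.
case=> _ [a Ha]; apply: (@rec_inv F M b n V B HB S _ a) => x.
move: (Ha x); rewrite {1}/codeword mxE => ->; done.
Qed.

Lemma sym_lb r : symbol_local g r -> (2 <= r)%N.
Proof.
move=> H; rewrite leqNgt; apply/negP => r1.
have [j _] : exists j, (0 : 'rV[F]_M) \in V j by case: Hsp.
pose i := Ordinal bpos.
have [S [cS HS]] := H i j.
have gS := sym_rec HS; case: (HS) => jS _. 
have : (#|S| <= 1)%N by rewrite -ltnS (leq_ltn_trans cS r1).
rewrite leq_eqVlt ltnS leqn0 cards_eq0 => /orP[/cards1P[k Sk]|/eqP S0].
  move: gS jS; rewrite Sk big_set1 in_set1 => gk jk.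
  by have := g_nz j i; rewrite (cap0 jk (g_in j i) gk) eqxx.
by move: gS; rewrite S0 big_set0 memv0 (negPf (g_nz j i)).
Qed.
Lemma exists_out j : exists u, u \notin V j.
Proof.
case: (boolP [exists u, u \notin V j]) => [/existsP//|/existsPn H].
have : (fullv <= V j)%VS by apply/subvP => u _; have := H u; rewrite negbK.
move/dimvS; rewrite dimvf; case: Hsp => -> _ _.
by rewrite dim_matrix mul1r leqNgt bM.
Qed.

Lemma sub_sumv (S : {set 'I_n}) k v : k \in S -> v \in V k -> v \in (\sum_(m in S) V m)%VS.
Proof.
move=> kS vk; have : (V k <= \sum_(m in S) V m)%VS by apply: (sumv_sup k).
by move/subvP; apply.
Qed.

Lemma sym_from_sum (S : {set 'I_n}) i j : j \notin S -> g j i \in (\sum_(k in S) V k)%VS ->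
  symbol_recovery_set g S i j.
Proof.
move=> jS /(@rec_sum F M b n V B HB) [a Ha]; split => //; exists a => x.
by rewrite -Ha /codeword mxE.
Qed.

Lemma sym_2 : symbol_local g 2.
Proof.
case: Hsp => _ _ Hcv.
move=> i j; have [u uj] := exists_out j; have [k uk] := Hcv u.
have [l vul] := Hcv (g j i - u).
exists [set k; l]; split; first by rewrite cards2; case: (k != l).
apply: sym_from_sum.
  rewrite in_set2 negb_or; apply/andP; split; apply/eqP => E.
    by move: uj; rewrite E uk.
  move: vul uj; rewrite -E => vul.
  have -> : u = g j i - (g j i - u) by rewrite opprB addrC subrK.
  by rewrite rpredB // g_in.
have -> : g j i = u + (g j i - u) by rewrite addrC subrK.
apply: rpredD; [apply: (sub_sumv _ k) | apply: (sub_sumv _ l)]; rewrite ?in_set2 ?eqxx ?orbT //. 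
Qed.

Lemma node_b1 : node_local g b.+1.
Proof.
case: Hsp => _ _ Hcv.
have [cov Hcov] := fin_all_exists Hcv.
move=> j; have [u uj] := exists_out j.
pose S := cov u |: [set cov (g j i + u) | i : 'I_b].
have jS : j \notin S.
  rewrite in_setU1 negb_or; apply/andP; split.
    by apply/eqP => E; move: uj; rewrite E Hcov.
  apply/imsetP => -[i _ E]; move: uj.
  have -> : u = (g j i + u) - g j i by rewrite addrC addKr.
  by have := Hcov (g j i + u); rewrite -E => ?; rewrite rpredB ?g_in.
have Hi : forall i, g j i \in (\sum_(k in S) V k)%VS.
  move=> i; have -> : g j i = (g j i + u) - u by rewrite addrK.
  apply: rpredB; apply: sub_sumv; rewrite ?Hcov //.
    by rewrite in_setU1 imset_f ?orbT.
  by rewrite in_setU1 eqxx.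
have [A HA] := fin_all_exists (fun i => @rec_sum F M b n V B HB S _ (Hi i)).
exists S; split.
  rewrite cardsU1 (leq_add (leq_b1 _)) //.
  by apply: leq_trans (leq_imset_card _ _) _; rewrite card_ord.
split => //; exists (fun i i' k => A i i' k) => x i.
by rewrite -HA /codeword mxE.
Qed.

Lemma node_sym r : node_local g r -> symbol_local g r.
Proof.
move=> H i j; have [S [cS [jS [a Ha]]]] := H j.
by exists S; split => //; split => //; exists (a i).
Qed.

End Part1.

Definition mulw (F : fieldType) (L : fieldExtType F) (m : nat)
  (w : {ffun 'I_m -> L}) (c : L) : {ffun 'I_m -> L} := [ffun i => c * w i].
Arguments mulw {F L m}.

Lemma mulw_linear (F : fieldType) (L : fieldExtType F) (m : nat)
  (w : {ffun 'I_m -> L}) : linear (mulw w).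
Proof. by move=> a x y; apply/ffunP => i; rewrite !ffunE mulrDl scalerAl. Qed.

HB.instance Definition _ (F : fieldType) (L : fieldExtType F) (m : nat) w :=
  GRing.isSemilinear.Build F L {ffun 'I_m -> L} _ (@mulw F L m w)
    (GRing.semilinear_linear (@mulw_linear F L m w)).

Section W.
Variables (F : fieldType) (L : fieldExtType F) (m : nat).
Local Notation W := {ffun 'I_m -> L}.

Definition ell (w : W) : {vspace W} := (linfun (mulw w) @: fullv)%VS.

Lemma ellP (w u : W) : reflect (exists c, u = mulw w c) (u \in ell w).
Proof.
apply: (iffP memv_imgP) => [[c _ ->]|[c ->]]; first by exists c; rewrite lfunE.
by exists c; rewrite ?memvf ?lfunE.
Qed.

Lemma ell_self w : w \in ell w.
Proof. by apply/ellP; exists 1; apply/ffunP => i; rewrite ffunE mul1r. Qed.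

Lemma nz_coord (w : W) : w != 0 -> exists i, w i != 0.
Proof.
move=> wn; case: (boolP [exists i, w i != 0]) => [/existsP//|/existsPn H].
by case/eqP: wn; apply/ffunP => i; rewrite ffunE; have := H i; rewrite negbK => /eqP.
Qed.

Lemma ell_dim w : w != 0 -> \dim (ell w) = \dim {:L}.
Proof.
move=> /nz_coord [i wi]; rewrite /ell limg_dim_eq //.
have /eqP -> : lker (linfun (mulw w)) == 0%VS; last by rewrite capv0.
apply/lker0P => c1 c2; rewrite !lfunE /= => /ffunP /(_ i); rewrite !ffunE.
by move/(mulIf wi).
Qed.

Lemma ell_same (w x : W) : x != 0 -> x \in ell w -> ell x = ell w.
Proof.
move=> xn /ellP [c xE].
have cn : c != 0 by apply/eqP => c0; case/eqP: xn; rewrite xE c0; apply/ffunP => i; rewrite !ffunE mul0r.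
apply/eqP; rewrite eqEsubv; apply/andP; split; apply/subvP => u /ellP [d ->]; apply/ellP.
  by exists (d * c); apply/ffunP => i; rewrite xE !ffunE mulrA.
exists (d / c); apply/ffunP => i; rewrite xE !ffunE mulrA divfK //.
Qed.

Lemma ell_excl (w y y' : W) (k : 'I_m) : w != 0 -> w \in ell y -> w \in ell y' ->
  y k != 0 -> y' k = 0 -> False.
Proof.
move=> wn /ellP [c wE] /ellP [d wE'] yk y'k.
have : c * y k = d * y' k by rewrite -(ffunE (fun i => c * y i)) -(ffunE (fun i => d * y' i)) -/(mulw y c) -/(mulw y' d) -wE -wE'.
rewrite y'k mulr0 => /eqP; rewrite mulf_eq0 (negPf yk) orbF => /eqP c0.
by case/eqP: wn; rewrite wE c0; apply/ffunP => i; rewrite !ffunE mul0r.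
Qed.

Definition dlt (i : 'I_m) : W := [ffun k => (k == i)%:R].

Lemma dlt_id i : dlt i i = 1.
Proof. by rewrite ffunE eqxx. Qed.

Lemma dlt_ne i k : k != i -> dlt i k = 0.
Proof. by move/negPf => ki; rewrite ffunE ki. Qed.

Lemma span_decomp (U : {vspace W}) :
  (forall t c, mulw (dlt t) c \in U) -> forall z, z \in U.
Proof.
move=> H z; have -> : z = \sum_t mulw (dlt t) (z t).
  apply/ffunP => k; rewrite sum_ffunE (bigD1 k) //= !ffunE eqxx mulr1 big1 ?addr0 //.
  by move=> t /negPf tk; rewrite !ffunE eq_sym tk mulr0.
by apply: rpred_sum => t _; apply: H.
Qed.

Lemma in_sum (y : 'I_m -> W) t x : x \in ell (y t) -> x \in (\sum_t ell (y t))%VS.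
Proof.
move=> xi; have : (ell (y t) <= \sum_t ell (y t))%VS by apply: (sumv_sup t).
by move/subvP; apply.
Qed.

Lemma choose_y (w : W) : w != 0 -> (1 < m)%N -> exists y : 'I_m -> W,
  [/\ forall t, y t != 0, forall t, w \notin ell (y t)
    & forall z, z \in (\sum_t ell (y t))%VS].
Proof.
move=> wn m1.
case: (boolP [exists i, w \in ell (dlt i)]) => [/existsP [i0 wi0] | /existsPn H]; last first.
  exists dlt; split => //.
    by move=> t; apply/eqP => /ffunP /(_ t); rewrite dlt_id ffunE; apply/eqP; apply: oner_neq0.
  by apply: span_decomp => t c; apply: in_sum; apply/ellP; exists c.
have [i1 ne] : exists i1 : 'I_m, i1 != i0.
  pose a := Ordinal (ltnW m1); pose b := Ordinal m1.
  exists (if i0 == a then b else a); case: (eqVneq i0 a) => [->|ne']; last by rewrite eq_sym.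
  by apply/eqP => /(congr1 val).
pose y t := if t == i0 then dlt i0 + dlt i1 else dlt t.
have yi1 : y i1 = dlt i1 by rewrite /y (negPf ne).
have y0 : y i0 = dlt i0 + dlt i1 by rewrite /y eqxx.
exists y; split.
- move=> t; case: (eqVneq t i0) => [->|tn]; [rewrite y0 | rewrite /y (negPf tn)]; apply/eqP => /ffunP.
    by move/(_ i1); rewrite ffunE dlt_id dlt_ne // add0r ffunE; apply/eqP; apply: oner_neq0.
  by move/(_ t); rewrite dlt_id ffunE; apply/eqP; apply: oner_neq0.
- move=> t; apply/negP => wt; case: (eqVneq t i0) => [E|tn].
    apply: (ell_excl _ _ _ i1 wn wt wi0).
      by rewrite E y0 ffunE dlt_id dlt_ne // add0r; apply: oner_neq0.
    by rewrite dlt_ne.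
  apply: (ell_excl _ _ _ t wn wt wi0).
    by rewrite /y (negPf tn) dlt_id; apply: oner_neq0.
  by rewrite dlt_ne.
apply: span_decomp => t c; case: (eqVneq t i0) => [->|tn]; last first.
  by apply: (in_sum _ t); apply/ellP; exists c; rewrite /y (negPf tn).
have -> : mulw (dlt i0) c = mulw (y i0) c - mulw (y i1) c.
  by apply/ffunP => k; rewrite y0 yi1 !ffunE mulrDr addrK.
by apply: rpredB; [apply: (in_sum _ i0) | apply: (in_sum _ i1)]; apply/ellP; exists c.
Qed.

End W.
Arguments ell {F L m}.
Arguments dlt {F L m}.

Section D.
Import passmx.
Variables (F : finFieldType) (L : fieldExtType F) (m : nat).
Hypothesis m1 : (1 < m)%N.
Local Notation W := {ffun 'I_m -> L}.
Local Notation d := (\dim {:W}).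
Let e := vbasis (fullv : {vspace W}).
Let eb : basis_of fullv e := vbasisP fullv.
Let phi := passmx.rVof e.
Let psi := passmx.vecof e.
Let phiK : cancel phi psi := passmx.rVofK eb.
Let psiK : cancel psi phi := passmx.vecofK eb.

Definition TT (U : {vspace W}) : {vspace 'rV[F]_d} := (linfun phi @: U)%VS.

Lemma memT x (U : {vspace W}) : reflect (exists2 u, u \in U & x = phi u) (x \in TT U).
Proof.
apply: (iffP memv_imgP) => [[u uU ->]|[u uU ->]]; exists u => //; by rewrite /phi lfunE.
Qed.

Lemma dimT (U : {vspace W}) : \dim (TT U) = \dim U.
Proof.
rewrite /TT limg_dim_eq //.
have /eqP -> : lker (linfun phi) == 0%VS; last by rewrite capv0.
by apply/lker0P => x y; rewrite !lfunE; apply: (can_inj phiK).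
Qed.

Definition sp (v : 'rV[F]_d) := TT (ell (psi v)).

Lemma sp_self v : v \in sp v.
Proof. by apply/memT; exists (psi v); rewrite ?ell_self ?psiK. Qed.

Lemma psi_nz v : v != 0 -> psi v != 0.
Proof. by move=> vn; apply: contra vn => /eqP E; rewrite -[v]psiK E /phi linear0. Qed.

Lemma sp_dim v : v != 0 -> \dim (sp v) = \dim {:L}.
Proof. by move=> vn; rewrite dimT ell_dim // psi_nz. Qed.

Lemma sp_same v x : v != 0 -> x != 0 -> x \in sp v -> sp x = sp v.
Proof.
move=> vn xn /memT [u uU xE].
rewrite /sp xE phiK (@ell_same _ _ _ (psi v) u) //.
by apply: contra xn => /eqP u0; rewrite xE u0 /phi linear0.
Qed.

Definition sl := undup (map sp (filter (fun v => v != 0) (enum 'rV[F]_d))).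

Lemma mem_sl U : U \in sl -> exists2 v, v != 0 & U = sp v.
Proof. by rewrite mem_undup => /mapP [v]; rewrite mem_filter => /andP [vn _] ->; exists v. Qed.

Lemma sp_sl v : v != 0 -> sp v \in sl.
Proof. by move=> vn; rewrite mem_undup; apply: map_f; rewrite mem_filter vn mem_enum. Qed.

Lemma idx v : v != 0 -> exists j : 'I_(size sl), nth 0%VS sl j = sp v.
Proof.
move=> vn; have iv : (index (sp v) sl < size sl)%N by rewrite index_mem sp_sl.
by exists (Ordinal iv); rewrite nth_index ?sp_sl.
Qed.

Lemma nth_sl (j : 'I_(size sl)) : exists2 v, v != 0 & nth 0%VS sl j = sp v.
Proof. exact: mem_sl (mem_nth _ (ltn_ord j)). Qed.

Lemma phi_nz u : u != 0 -> phi u != 0.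
Proof. by move=> un; apply: contra un => /eqP E; rewrite -[u]phiK E /psi linear0. Qed.

Lemma in_sp_phi y x : x \in ell y -> phi x \in sp (phi y).
Proof. by move=> xy; apply/memT; exists x; rewrite ?phiK. Qed.

Lemma spread_main : exists n (V : 'I_n -> {vspace 'rV[F]_d}),
  is_spread_family (\dim {:L}) V /\
  forall j, exists S : {set 'I_n}, [/\ j \notin S, (#|S| <= m)%N & (V j <= \sum_(k in S) V k)%VS].
Proof.
exists (size sl), (fun j => nth 0%VS sl j); split.
  split.
  - by move=> j; have [v vn ->] := nth_sl j; rewrite sp_dim.
  - move=> i j ij; apply/eqP; rewrite -subv0; apply/subvP => x.
    rewrite memv_cap memv0 => /andP [xi xj]; apply/negPn/negP => xn.
    have [v vn Ei] := nth_sl i; have [w wn Ej] := nth_sl j.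
    move: xi xj; rewrite Ei Ej => xi xj.
    have : nth 0%VS sl i = nth 0%VS sl j by rewrite Ei Ej -(@sp_same v x vn xn xi) (@sp_same w x wn xn xj).
    by move/eqP; rewrite nth_uniq ?undup_uniq // => /eqP/val_inj E; move: ij; rewrite E eqxx.
  - move=> v; case: (eqVneq v 0) => [->|vn].
      have i0 : (0 < m)%N by apply: ltnW.
      pose i := Ordinal i0.
      have dn : dlt i != 0 :> {ffun 'I_m -> L}.
        by apply/eqP => /ffunP /(_ i); rewrite dlt_id ffunE; apply/eqP; apply: oner_neq0.
      by have [j _] := idx _ (phi_nz _ dn); exists j; rewrite mem0v.
    by have [j Ej] := idx _ vn; exists j; rewrite Ej sp_self.
move=> j; have [v vn Ej] := nth_sl j; rewrite Ej.
have [y [yn ywn ysum]] := @choose_y _ _ _ _ (psi_nz _ vn) m1.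
have [k Hk] := fin_all_exists (fun t => idx _ (phi_nz _ (yn t))).
exists [set k t | t : 'I_m]; split.
- apply/imsetP => -[t _ E]; have := sp_self v; rewrite -Ej E Hk.
  case/memT => u ut vE; move: (ywn t); rewrite vE phiK.
  by move: ut; rewrite /sp phiK => ->.
- by apply: leq_trans (leq_imset_card _ _) _; rewrite card_ord.
apply/subvP => x /memT [u uw ->]; have := ysum u; case/memv_sumP => us Hus ->.
rewrite /phi linear_sum /=; apply: rpred_sum => t _.
have : (nth 0%VS sl (k t) <= \sum_(k0 in [set k t | t : 'I_m]) nth 0%VS sl k0)%VS.
  by apply: (sumv_sup (k t)); rewrite ?imset_f.
by move/subvP; apply; rewrite Hk; apply: in_sp_phi; apply: Hus.
Qed.

End D.

Lemma ext_exists (F : finFieldType) (k : nat) : (0 < k)%N ->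
  exists L : fieldExtType F, \dim {:L} = k.
Proof.
move=> k_gt0; pose q := #|F|; pose m := (q ^ k)%N.
have q_gt1 : (1 < q)%N := finNzRing_gt1 F.
have m_gt1: (m > 1)%N by rewrite (ltn_exp2l 0).
have m_gt0 := ltnW m_gt1; have m1_gt0: (m.-1 > 0)%N by rewrite -ltnS prednK.
pose pq (R : nzRingType) : {poly R} := 'X^m - 'X.
have Dq R: pq R = ('X^(m.-1) - 1) * ('X - 0).
  by rewrite subr0 mulrBl mul1r -exprSr prednK.
have /FinSplittingFieldFor[/= L splitLq]: pq F != 0.
  by rewrite Dq monic_neq0 ?rpredM ?monicXsubC ?monicXnsubC.
rewrite rmorphB rmorphXn /= map_polyX -/(pq L) in splitLq.
have [p pr_p pcharFp] := finPcharP F.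
have pcharL: p \in [pchar L] by rewrite pchar_lalg.
have mL0 : (m%:R : L) = 0.
  have Eq : q = (p ^ logn p q)%N := card_pprimeChar pcharFp.
  have lg : (0 < logn p q)%N.
    by rewrite lt0n; apply/eqP => l0; move: q_gt1; rewrite Eq l0.
  by rewrite /m Eq -expnM natrX pcharf0 // expr0n muln_eq0 !eqn0Ngt lg k_gt0.
have /finField_galois_generator[/= a _ Da]: (1 <= {:L})%VS by apply: sub1v.
pose Em := fixedSpace (a ^+ k)%g; rewrite dimv1 expn1 in Da.
have{splitLq} [zs DqL defL] := splitLq.
have Uzs: uniq zs.
  rewrite -separable_prod_XsubC -(eqp_separable DqL) Dq separable_root andbC.
  rewrite /root !hornerE subr_eq0 eq_sym expr0n gtn_eqF ?oner_eq0 //=.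
  rewrite cyclotomic.separable_Xn_sub_1 // -subn1 natrB // subr_eq0.
  by rewrite mL0 eq_sym oner_eq0.
pose Fm := finvect_type L.
have cardL : #|Fm| = m.
  suffices /eq_card->: Fm =i zs.
    apply: succn_inj; rewrite (card_uniqP _) //= -(size_prod_XsubC _ id).
    by rewrite -(eqp_size DqL) size_polyDl size_polyXn // size_polyN size_polyX.
  have in_zs: zs =i Em.
    move=> z; rewrite -root_prod_XsubC -(eqp_root DqL) (sameP fixedSpaceP eqP).
    rewrite /root !hornerE subr_eq0 /= /m; congr (_ == z).
    elim: (k) => [|i IHi]; first by rewrite gal_id.
    by rewrite expgSr expnSr exprM IHi galM ?Da ?memvf.
  suffices defEm: Em = {:L}%VS by move=> z; rewrite in_zs defEm memvf.
  apply/eqP; rewrite eqEsubv subvf -defL -[Em]subfield_closed agenvS //.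
  by rewrite subv_add sub1v; apply/span_subvP=> z; rewrite in_zs.
exists L; apply/eqP; rewrite -(eqn_exp2l _ _ q_gt1) -/m -cardL.
by have := card_vspace (fullv : {vspace Fm}); rewrite card_vspacef => ->.
Qed.

Lemma min_exists (P : nat -> Prop) m : P m ->
  exists r, P r /\ (r <= m)%N /\ forall r', P r' -> (r <= r')%N.
Proof.
elim/ltn_ind: m => m IH Pm.
case: (classic (exists r', P r' /\ (r' < m)%N)) => [[r' [Pr' lt]]|H].
  have [r [Pr [le mn]]] := IH r' lt Pr'.
  by exists r; split => //; split => //; apply: leq_trans le (ltnW lt).
exists m; split => //; split => // r' Pr'; rewrite leqNgt; apply/negP => lt.
by apply: H; exists r'.
Qed.

Theorem mainTheorem8 (F : finFieldType) (M b : nat) :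
  (b %| M)%N -> (b < M)%N ->
  (forall (n : nat) (V : 'I_n -> {vspace 'rV[F]_M})
          (B : 'I_n -> b.-tuple 'rV[F]_M),
      is_spread_family b V ->
      (forall j, basis_of (V j) (B j)) ->
      let g := fun j i => tnth (B j) i in
      symbol_locality g 2 /\
      exists rn, node_locality g rn /\ (2 <= rn <= b.+1)%N) /\
  (exists (n : nat) (V : 'I_n -> {vspace 'rV[F]_M}),
      is_spread_family b V /\
      forall B : 'I_n -> b.-tuple 'rV[F]_M,
        (forall j, basis_of (V j) (B j)) ->
        exists rn, node_locality (fun j i => tnth (B j) i) rn /\ (rn <= M %/ b)%N).
Proof.
move=> Hdiv bM.
have bpos : (0 < b)%N.
  rewrite lt0n; apply/eqP => b0; move: Hdiv bM; rewrite b0 dvd0n => /eqP ->.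
  by [].
split.
  move=> n V B Hsp HB g; split.
    by split; [exact: (@sym_2 F M b n V B HB Hsp bM) | exact: (@sym_lb F M b n V B HB Hsp bpos)].
  have [r [Hr [rle rmin]]] := @min_exists (node_local g) _ (@node_b1 F M b n V B HB Hsp bM).
  exists r; split; first by split.
  by rewrite rle andbT; apply: (@sym_lb F M b n V B HB Hsp bpos); apply: node_sym.
case/dvdnP: Hdiv => m Mdef.
have m1 : (1 < m)%N.
  rewrite ltnNge; apply/negP => m1; move: bM; rewrite Mdef.
  by rewrite ltnNge (leq_trans (leq_mul m1 (leqnn b))) ?mul1n.
have hm : (M %/ b = m)%N by rewrite Mdef mulnK.
have [L dL] := ext_exists F b bpos.
have dW : \dim {:{ffun 'I_m -> L}} = M.
  rewrite dimvf; have -> : dim {ffun 'I_m -> L} = (#|'I_m| * dim L)%N by [].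
  by rewrite card_ord -dimvf dL Mdef.
clear Mdef; subst M.
have [n [V [Hsp Hloc]]] := @spread_main F L m m1.
rewrite dL in Hsp.
exists n, V; split => // B HB.
have nl : node_local (fun j i => tnth (B j) i) m.
  move=> j; have [S [jS cS sub]] := Hloc j.
  have Hi : forall i, tnth (B j) i \in (\sum_(k in S) V k)%VS.
    by move=> i; apply: (subvP sub); exact: (basis_mem (HB j)) (mem_tnth _ _).
  have [A HA] := fin_all_exists (fun i => @rec_sum F _ b n V B HB S _ (Hi i)).
  exists S; split => //; split => //; exists (fun i i' k => A i i' k) => x i.
  by rewrite -HA /codeword mxE.
have [r [Hr [rle rmin]]] := @min_exists (node_local (fun j i => tnth (B j) i)) _ nl.
by exists r; split; [split | rewrite hm].
Qed.
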